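(* Let $n,k\in\mathbb{N}$. If a finite set $X\subseteq\mathbb{N}$ is $\omega^{n+6k}$-large and exp-sparse, then $X$ admits an $(\omega^n,\omega^k)$-grouping, i.e. for every colouring $P:[X]^2\to 2$ there exists an $(\omega^n,\omega^k)$-grouping for $P$.
   Context: Ordinals below $\omega^\omega$ are in Cantor normal form; $\omega^j\cdot m$ = sum of $m$ copies of $\omega^j$. For $m\in\mathbb{N}$: $0[m]=0$, $(\beta+1)[m]=\beta$, $(\beta+\omega^{n})[m]=\beta+\omega^{n-1}\cdot m$ for $n\ge1$. A finite $X=\{x_0<\dots<x_{\ell-1}\}\subseteq\mathbb{N}$ is $\alpha$-large if $\alpha[x_0]\cdots[x_{\ell-1}]=0$. A set $X$ with $\min X\ge3$ is exp-sparse if $x<y$ in $X$ implies $4^x<y$. For $\alpha,\beta<\omega^\omega$, $X\subseteq\mathbb{N}$ and $P:[X]^2\to2$, a finite sequence $\langle F_i\subseteq X:i<\ell\rangle$ of finite sets is an $(\alpha,\beta)$-grouping for $P$ if: (1) $\max F_i<\min F_j$ for all $i<j<\ell$; (2) each $F_i$ is $\alpha$-large; (3) $\{\max F_i:i<\ell\}$ is $\beta$-large; (4) for all $i<j<\ell$, all $x,x'\in F_i$ and $y,y'\in F_j$, $P(x,y)=P(x',y')$. *)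

(* Defs.v *)
From mathcomp Require Import all_boot.
Set Implicit Arguments. Unset Strict Implicit. Unset Printing Implicit Defensive.

(* Ordinals below omega^omega in Cantor normal form:
   the list [:: e1; e2; ...; er] with e1 >= e2 >= ... >= er denotes
   omega^e1 + omega^e2 + ... + omega^er; [::] denotes 0. *)
Definition cnf := seq nat.

Definition omega_pow (n : nat) : cnf := [:: n].

(* Fundamental sequence: 0[m] = 0, (b+1)[m] = b,
   (b + omega^(n+1))[m] = b + omega^n * m  (m copies of omega^n). *)
Definition fund (a : cnf) (m : nat) : cnf :=
  match rev a with
  | [::] => [::]
  | 0 :: r => rev r
  | n.+1 :: r => rev r ++ nseq m n
  end.

(* Finite subsets of nat are represented by their strictly increasing
   enumeration x_0 < ... < x_{l-1}. X is a-large iff a[x_0]...[x_{l-1}] = 0. *)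
Definition large (a : cnf) (X : seq nat) : bool := foldl fund a X == [::].

Definition exp_sparse (X : seq nat) : Prop :=
  (forall x, x \in X -> 3 <= x) /\
  (forall x y, x \in X -> y \in X -> x < y -> 4 ^ x < y).

(* (a,b)-grouping for P : [X]^2 -> 2 (given as a function on pairs of naturals;
   only its values on pairs x < y of elements of X matter).
   Fs = <F_0, ..., F_{l-1}>, each F_i a finite subset of X given by its
   increasing enumeration, so max F_i = last 0 F_i, min F_i = head 0 F_i. *)
Definition grouping (a b : cnf) (X : seq nat) (P : nat -> nat -> bool)
    (Fs : seq (seq nat)) : Prop :=
  (forall i, i < size Fs ->
     sorted ltn (nth [::] Fs i) /\ {subset nth [::] Fs i <= X}) /\
  (forall i j, i < j < size Fs ->
     last 0 (nth [::] Fs i) < head 0 (nth [::] Fs j)) /\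
  (forall i, i < size Fs -> large a (nth [::] Fs i)) /\
  large b [seq last 0 F | F <- Fs] /\
  (forall i j, i < j < size Fs ->
     forall x x' y y', x \in nth [::] Fs i -> x' \in nth [::] Fs i ->
       y \in nth [::] Fs j -> y' \in nth [::] Fs j -> P x y = P x' y').

(* Main.v *)
Require Import Defs.
From mathcomp Require Import all_boot zify.
Set Implicit Arguments. Unset Strict Implicit. Unset Printing Implicit Defensive.

Definition Lg (m : nat) (X : seq nat) : bool := large [:: m] X.
Definition sg (m c : nat) (S : seq nat) : bool := large (nseq c m) S.

Lemma large_cons a x S : large a (x :: S) = large (fund a x) S.
Proof. by []. Qed.

Lemma large_nil a : large a [::] = (a == [::]).
Proof. by []. Qed.

Lemma foldl_fund_nil S : foldl fund [::] S = [::].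
Proof. by elim: S. Qed.

Lemma large_emp S : large [::] S.
Proof. by rewrite /large foldl_fund_nil. Qed.

Lemma fund_cat b a x : a != [::] -> fund (b ++ a) x = b ++ fund a x.
Proof.
rewrite /fund; have -> : rev (b ++ a) = rev a ++ rev b by exact: rev_cat.
case E: (rev a) => [|h r].
  by move: E => /(f_equal rev); rewrite revK => ->.
move=> _; case: h E => [|h] E /=; first by rewrite rev_cat revK.
by rewrite rev_cat revK catA.
Qed.

Lemma large_catr a S1 S2 : large a S1 -> large a (S1 ++ S2).
Proof. by rewrite /large foldl_cat => /eqP ->; rewrite foldl_fund_nil. Qed.

Lemma split_large b a S : large (b ++ a) S ->
  exists S1 S2, S = S1 ++ S2 /\ large a S1 /\ large b S2.
Proof.
elim: S a => [|x S IH] a.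
  rewrite large_nil => /eqP; case: b => // ; case: a => // _.
  by exists [::], [::].
case: (altP (a =P [::])) => [->|an].
  by rewrite cats0 => H; exists [::], (x :: S); split => //; rewrite large_emp.
rewrite large_cons fund_cat // => /IH [S1 [S2 [-> [H1 H2]]]].
by exists (x :: S1), S2.
Qed.

Lemma large_cat_exact b a S1 S2 : large a S1 ->
  exists S0 S1', S1 = S0 ++ S1' /\
    large (b ++ a) (S1 ++ S2) = large b (S1' ++ S2).
Proof.
elim: S1 a => [|x T IH] a.
  by rewrite large_nil => /eqP ->; exists [::], [::]; split => //; rewrite (cats0 b).
case: (altP (a =P [::])) => [->|an].
  by move=> _; exists [::], (x :: T); split => //; rewrite (cats0 b).
rewrite large_cons => /IH [S0 [S1' [-> E]]].
exists (x :: S0), S1'; split => //.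
by rewrite cat_cons large_cons fund_cat // E.
Qed.

Lemma Lg_nil m : Lg m [::] = false.
Proof. by []. Qed.

Lemma Lg0 X : Lg 0 X = (X != [::]).
Proof. by case: X => // x S; rewrite /Lg large_cons /= large_emp. Qed.

Lemma LgS m x S : Lg m.+1 (x :: S) = sg m x S.
Proof. by []. Qed.

Lemma sg0 m S : sg m 0 S.
Proof. exact: large_emp. Qed.

Lemma sg1 m S : sg m 1 S = Lg m S.
Proof. by []. Qed.

Lemma nseqSr (T : Type) c (m : T) : nseq c.+1 m = nseq c m ++ [:: m].
Proof. by rewrite -addn1 nseqD. Qed.

Lemma sgS_split m c S : sg m c.+1 S ->
  exists S1 S2, S = S1 ++ S2 /\ Lg m S1 /\ sg m c S2.
Proof. by rewrite /sg nseqSr => /split_large. Qed.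

Lemma sg_le m c c' S : c' <= c -> sg m c S -> sg m c' S.
Proof.
move=> le; rewrite /sg -(subnK le) nseqD => /split_large [S1 [S2 [-> [H1 _]]]].
exact: large_catr.
Qed.

Lemma pairwise_catr (A S : seq nat) : pairwise ltn (A ++ S) -> pairwise ltn S.
Proof. by rewrite pairwise_cat => /and3P []. Qed.

Lemma pairwise_catl (A S : seq nat) : pairwise ltn (A ++ S) -> pairwise ltn A.
Proof. by rewrite pairwise_cat => /and3P []. Qed.

Lemma PE m : forall c A S, pairwise ltn (A ++ S) -> sg m c S -> sg m c (A ++ S).
Proof.
elim: m => [|m IHm].
- have HL : forall A S, Lg 0 S -> Lg 0 (A ++ S).
    by move=> A S; rewrite !Lg0; case: A; case: S.
  elim=> [|c IHc] A S pw; first by rewrite !sg0.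
  move/sgS_split=> [B1 [B2 [E [H1 H2]]]]; subst S.
  have H1' : Lg 0 (A ++ B1) by exact: HL.
  rewrite /sg nseqSr catA.
  have [S0 [S1' [E' ->]]] := large_cat_exact (nseq c 0) B2 H1'.
  apply: IHc => //; move: pw; rewrite catA E' -catA; exact: pairwise_catr.
- have HL : forall A S, pairwise ltn (A ++ S) -> Lg m.+1 S -> Lg m.+1 (A ++ S).
    move=> [|a A] [|s S] //= pw.
    rewrite !LgS => H.
    have as_ : a < s.
      by move: pw => /andP [/allP Hp _]; apply: Hp; rewrite mem_cat mem_head orbT.
    have H' : sg m a S by apply: sg_le H; apply: ltnW.
    have -> : A ++ s :: S = (A ++ [:: s]) ++ S by rewrite -catA.
    apply: IHm => //; move: pw => /andP [_]; by rewrite -catA.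
  elim=> [|c IHc] A S pw; first by rewrite !sg0.
  move/sgS_split=> [B1 [B2 [E [H1 H2]]]]; subst S.
  have H1' : Lg m.+1 (A ++ B1) by apply: HL => //; rewrite catA in pw; exact: pairwise_catl pw.
  rewrite /sg nseqSr catA.
  have [S0 [S1' [E' ->]]] := large_cat_exact (nseq c m.+1) B2 H1'.
  apply: IHc => //; move: pw; rewrite catA E' -catA; exact: pairwise_catr.
Qed.

Lemma sg_cons m c S1 S2 : pairwise ltn (S1 ++ S2) -> Lg m S1 -> sg m c S2 ->
  sg m c.+1 (S1 ++ S2).
Proof.
move=> pw H1 H2; rewrite /sg nseqSr.
have [S0 [S1' [E ->]]] := large_cat_exact (nseq c m) S2 H1.
apply: PE => //; move: pw; rewrite E -catA; exact: pairwise_catr.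
Qed.

Lemma Lg_down m X : pairwise ltn X -> (forall x, x \in X -> 1 <= x) -> Lg m.+1 X -> Lg m X.
Proof.
case: X => [|x S] // pw pos; rewrite LgS => H.
have : sg m 1 S by apply: sg_le H; apply: pos; exact: mem_head.
rewrite sg1 => H'; exact: (PE (A := [:: x]) (c := 1)).
Qed.

Definition sparse (Z : seq nat) : Prop :=
  forall x y, x \in Z -> y \in Z -> x < y -> 4 ^ x < y.

Lemma sparse_sub A B : {subset A <= B} -> sparse B -> sparse A.
Proof. by move=> sub sp x y xA yA; apply: sp; apply: sub. Qed.

Lemma sg0_size N Z : sg 0 N Z = (N <= size Z).
Proof.
rewrite /sg /large; elim: Z N => [|z Z IH] [|N] //=.
- by rewrite foldl_fund_nil.
- have -> : fund (nseq N.+1 0) z = nseq N 0.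
    by rewrite /fund rev_nseq /= rev_nseq.
  exact: IH.
Qed.

Lemma ph_count (T : eqType) (f : T -> nat) c (s : seq T) : 0 < c ->
  all (fun x => f x < c) s ->
  exists d, d < c /\ size s <= c * count (fun x => f x == d) s.
Proof.
elim: c s => [//|c IH] s _ Hall.
case: (posnP c) => [c0|cpos].
  subst c; exists 0; split => //; rewrite mul1n.
  have : all (fun x => f x == 0) s.
    by apply/allP => x /(allP Hall); rewrite ltnS leqn0.
  by rewrite all_count => /eqP ->.
set s' := [seq x <- s | f x != c].
have Hall' : all (fun x => f x < c) s'.
  apply/allP => x; rewrite mem_filter => /andP [xc /(allP Hall)].
  by rewrite ltnS leq_eqVlt (negbTE xc).
have [d [dc Hd]] := IH s' cpos Hall'.
have E1 : count (fun x => f x == d) s' = count (fun x => f x == d) s.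
  rewrite /s' count_filter; apply: eq_count => x /=.
  by case: (altP (f x =P d)) => //= ->; rewrite neq_ltn dc.
have E2 : size s' = count (predC (fun x => f x == c)) s.
  by rewrite /s' size_filter.
have E3 := count_predC (fun x => f x == c) s.
case: (leqP (size s) (c.+1 * count (fun x => f x == c) s)) => H.
  by exists c; split.
exists d; split; first by apply: (ltn_trans dc).
rewrite -E1; move: Hd; rewrite E2 => Hd.
nia.
Qed.

Lemma sg_list m N Z : sg m N Z ->
  exists Ss R, size Ss = N /\ all (Lg m) Ss /\ Z = flatten Ss ++ R.
Proof.
elim: N Z => [|N IH] Z.
  by move=> _; exists [::], Z.
move/sgS_split => [S1 [S2 [-> [H1 /IH [Ss [R [E1 [E2 ->]]]]]]]].
by exists (S1 :: Ss), R; rewrite /= E1 H1 E2 catA.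
Qed.

Lemma sg_of_list m Ss R : pairwise ltn (flatten Ss ++ R) -> all (Lg m) Ss ->
  sg m (size Ss) (flatten Ss ++ R).
Proof.
elim: Ss => [|S Ss IH] /=; first by rewrite sg0.
rewrite -catA => pw /andP [H1 H2].
apply: sg_cons => //; apply: IH => //; exact: pairwise_catr pw.
Qed.

Lemma pw_drop (A B C : seq nat) : pairwise ltn (A ++ B ++ C) -> pairwise ltn (A ++ C).
Proof.
rewrite !pairwise_cat => /and3P [/allrelP H1 H2 /and3P [_ _ H3]].
apply/and3P; split => //; apply/allrelP => x y xA yC; apply: H1 => //.
by rewrite mem_cat yC orbT.
Qed.

Lemma pw_mem_cons (A B : seq nat) h : pairwise ltn (A ++ B) -> h \in A ->
  pairwise ltn (h :: B).
Proof.
rewrite pairwise_cat => /and3P [/allrelP H1 _ H3] hA.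
rewrite pairwise_cons H3 andbT; apply/allP => y yB; exact: H1.
Qed.

Lemma pw_cons_filter h (L : seq nat) p : pairwise ltn (h :: L) ->
  pairwise ltn (h :: [seq z <- L | p z]).
Proof.
rewrite !pairwise_cons => /andP [/allP H1 H2]; apply/andP; split.
  by apply/allP => y; rewrite mem_filter => /andP [_ /H1].
exact: pairwise_filter.
Qed.

Lemma pw_flatten_mem (Ss : seq (seq nat)) S : pairwise ltn (flatten Ss) -> S \in Ss ->
  pairwise ltn S.
Proof.
elim: Ss => [|S' Ss IH] //=; rewrite inE pairwise_cat => /and3P [_ H1 H2].
by case/orP => [/eqP ->|]; last exact: IH.
Qed.

Lemma sg_insert m K h A Y : pairwise ltn (h :: A ++ Y) -> sg m.+1 K (h :: Y) ->
  sg m.+1 K (h :: A ++ Y).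
Proof.
case: K => [|K] pw; first by rewrite !sg0.
move/sgS_split => [[|b B1] [B2 [E [H1 H2]]]] //.
case: E => Eb EY; subst Y b.
move: H1; rewrite LgS => H1.
have H1' : sg m h (A ++ B1).
  apply: PE => //; move: pw; rewrite pairwise_cons catA => /andP [_].
  exact: pairwise_catl.
rewrite catA -cat_cons; apply: sg_cons => //; by rewrite cat_cons -catA.
Qed.

Lemma sq_lt_4exp h : h * h < 4 ^ h.
Proof.
have H : h < 2 ^ h by apply: ltn_expl.
have -> : 4 ^ h = 2 ^ h * 2 ^ h by rewrite -expnMn.
case: h H => [|h] H //; apply: ltn_mul => //.
Qed.

Definition good j c (col : nat -> nat) d (S : seq nat) : bool :=
  if S is s :: Rs then sg j (s %/ (2 * c)) [seq y <- Rs | col y == d] else false.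

Lemma nonempty_of_sg j K W : 0 < K -> sg j K W -> W <> [::].
Proof.
move=> K0 H E; subst W.
by have := sg_le K0 H; rewrite sg1 Lg_nil.
Qed.

Lemma pair j col c d : 0 < c -> forall Ss R (H : seq nat), size H <= 1 ->
  pairwise ltn (H ++ flatten Ss ++ R) -> sparse (H ++ flatten Ss ++ R) ->
  (forall z, z \in H ++ flatten Ss ++ R -> 2 * c <= z) ->
  sg j.+1 ((count (good j c col d) Ss + size H) %/ 2)
     (H ++ [seq z <- flatten Ss ++ R | col z == d]).
Proof.
move=> c0; elim=> [|S Ss IH] R H Hs pw sp bd.
  by rewrite divn_small ?sg0 //=; lia.
move: pw sp bd; rewrite /= -catA.
set Z' := flatten Ss ++ R => pw sp bd.
rewrite filter_cat.
case Hg: (good j c col d S); last first.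
  have subZ : {subset H ++ Z' <= H ++ S ++ Z'}.
    by move=> z; rewrite !mem_cat => /orP [->|->] //; rewrite !orbT.
  have IH3 := IH R H Hs (pw_drop pw) (sparse_sub subZ sp) (fun z zi => bd z (subZ z zi)).
  rewrite add0n.
  clear subZ sp bd IH; move: Hs IH3 pw; case: H => [|h [|? ?]] //= _ IH3 pw.
    apply: PE => //; rewrite -filter_cat; exact: pairwise_filter.
  apply: sg_insert => //; rewrite -filter_cat; exact: pw_cons_filter.
case: S Hg pw sp bd => [|s Rs] // Hg pw sp bd.
rewrite /good in Hg.
set W := [seq y <- Rs | col y == d] in Hg.
have EF : [seq z <- s :: Rs | col z == d] = [seq z <- [:: s] | col z == d] ++ W by rewrite /=; case: (col s == d).
rewrite EF.
have sS : s \in H ++ (s :: Rs) ++ Z' by rewrite !mem_cat mem_head !orbT.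
have c2s : 2 * c <= s := bd s sS.
have pwS : pairwise ltn ([seq z <- [:: s] | col z == d] ++ W ++ [seq z <- Z' | col z == d]).
  rewrite catA -EF -filter_cat; apply: pairwise_filter.
  exact: pairwise_catr pw.
have Kpos : 0 < s %/ (2 * c) by rewrite divn_gt0 // muln_gt0 c0.
move: Hs pw sp bd sS IH; case: H => [|h [|? ?]] // _ pw sp bd sS IH.
- rewrite !cat0s in pw sp bd sS *.
  have [h [W' EW]] : exists h W', W = h :: W'.
    by case: (W) (nonempty_of_sg Kpos Hg) => // h W' _; exists h, W'.
  have hRs : h \in Rs.
    have : h \in W by rewrite EW mem_head.
    by rewrite /W mem_filter => /andP [_ ->].
  have subZ : {subset h :: Z' <= (s :: Rs) ++ Z'}.
    move=> z; rewrite inE => /orP [/eqP ->|zZ]; first by rewrite mem_cat inE hRs orbT.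
    by rewrite mem_cat zZ orbT.
  have pwh : pairwise ltn (h :: Z').
    apply: (pw_mem_cons (A := s :: Rs)) => //; by rewrite inE hRs orbT.
  have IH3 := IH R [:: h] (leqnn _) pwh (sparse_sub subZ sp) (fun z zi => bd z (subZ z zi)).
  rewrite -catA EW; rewrite EW in pwS.
  apply: PE => //; apply: sg_insert; first exact: pairwise_catr pwS.
  move: IH3; rewrite addn0 /= add1n addn1 //.
- rewrite !cat1s in pw sp bd sS *.
  have hs : h < s.
    by move: pw => /andP [/allP Hp _]; apply: Hp; rewrite mem_head.
  have hin : h \in h :: (s :: Rs) ++ Z' by rewrite mem_head.
  have h4s : 4 ^ h < s by apply: sp.
  have c2h : 2 * c <= h := bd h hin.
  have hK : h <= s %/ (2 * c).
    rewrite leq_divRL ?muln_gt0 //.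
    have := sq_lt_4exp h; nia.
  have Hh : sg j h ([seq z <- [:: s] | col z == d] ++ W).
    apply: PE; first by rewrite -EF; apply: pairwise_filter; move: pw => /andP [_]; exact: (@pairwise_catl (s :: Rs) Z').
    exact: sg_le hK Hg.
  have subZ : {subset Z' <= h :: (s :: Rs) ++ Z'}.
    by move=> z zZ; rewrite inE mem_cat zZ !orbT.
  have pwZ : pairwise ltn Z'.
    by move: pw => /andP [_]; exact: (@pairwise_catr (s :: Rs) Z').
  have IH3 := IH R [::] (leq0n _) pwZ (sparse_sub subZ sp) (fun z zi => bd z (subZ z zi)).
  have -> : (true + count (good j c col d) Ss + 1) %/ 2 = ((count (good j c col d) Ss + 0) %/ 2).+1.
    rewrite addn0; lia.
  rewrite -cat_cons; apply: sg_cons => //.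
  rewrite cat_cons -EF -filter_cat; apply: pw_cons_filter; exact: pw.
Qed.

Definition dom j c col (S : seq nat) : nat := find (fun d => good j c col d S) (iota 0 c).

Lemma domP j c col S : dom j c col S < c -> good j c col (dom j c col S) S.
Proof.
rewrite /dom => H.
have Hh : has (fun d => good j c col d S) (iota 0 c) by rewrite has_find size_iota.
have := nth_find 0 Hh; rewrite nth_iota //; by rewrite size_iota in H.
Qed.

Lemma domE j c col S d : d < c -> good j c col d S -> dom j c col S < c.
Proof.
move=> dc g; rewrite /dom -[X in _ < X](size_iota 0) -has_find.
by apply/hasP; exists d => //; rewrite mem_iota.
Qed.

Lemma arith_q c q N K : 0 < c -> q * (2 * c) <= N -> N <= c * K -> q * 2 <= K.
Proof. nia. Qed.

Lemma arith_q1 c q N K : 0 < c -> q * (2 * c) <= N -> N <= c * K -> q <= K.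
Proof. nia. Qed.

Lemma PH j : forall col c N Z, 0 < c -> pairwise ltn Z -> sparse Z ->
  (forall z, z \in Z -> 2 * c <= z) -> (forall z, z \in Z -> col z < c) ->
  sg j N Z -> exists d, sg j (N %/ (2 * c)) [seq z <- Z | col z == d].
Proof.
elim: j => [|j IH] col c N Z c0 pw sp bd cb.
  rewrite sg0_size => HN.
  have Hall : all (fun x => col x < c) Z by apply/allP.
  have [d [_ Hd]] := ph_count c0 Hall.
  exists d; rewrite sg0_size size_filter.
  apply: (arith_q1 c0 (leq_divM N (2 * c))); exact: leq_trans HN Hd.
move/sg_list => [Ss [R [EN [HL EZ]]]].
have memS : forall S, S \in Ss -> {subset S <= Z}.
  by move=> S SS z zS; rewrite EZ mem_cat; apply/orP; left; apply/flattenP; exists S.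
have Hex : forall S, S \in Ss -> dom j c col S < c.
  move=> S SS.
  have pwS : pairwise ltn S.
    by apply: (pw_flatten_mem (Ss := Ss)) => //; move: pw; rewrite EZ; exact: pairwise_catl.
  have LS : Lg j.+1 S by apply: (allP HL).
  case: S SS pwS LS => [|s Rs] // SS pwS; rewrite LgS => Hs.
  have sub : {subset Rs <= Z} by move=> z zR; apply: (memS _ SS); rewrite inE zR orbT.
  have [d Hd] := IH col c s Rs c0 (pairwise_catr (A := [:: s]) pwS)
     (sparse_sub sub sp) (fun z zi => bd z (sub z zi)) (fun z zi => cb z (sub z zi)) Hs.
  have s2c : 2 * c <= s by apply: bd; apply: (memS _ SS); exact: mem_head.
  have Kpos : 0 < s %/ (2 * c) by rewrite divn_gt0 // muln_gt0 c0.
  have [y Wy] : exists y, y \in [seq z <- Rs | col z == d].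
    by case: [seq z <- Rs | col z == d] (nonempty_of_sg Kpos Hd) => // y W _; exists y; exact: mem_head.
  move: Wy; rewrite mem_filter => /andP [/eqP cy yR].
  apply: (domE (d := d)); first by rewrite -cy; apply: cb; exact: sub.
  exact: Hd.
have Hall : all (fun S => dom j c col S < c) Ss by apply/allP.
have [d [dc Hd]] := ph_count c0 Hall.
have Hp := @pair j col c d c0 Ss R [::] (leq0n _).
rewrite /= -EZ addn0 in Hp.
have := Hp pw sp bd => {}Hp.
exists d; apply: sg_le Hp.
have Hc : count (fun S => dom j c col S == d) Ss <= count (good j c col d) Ss.
  apply: sub_count => S /eqP E; rewrite -E; apply: domP; by rewrite E.
rewrite leq_divRL // -EN.
apply: (arith_q c0 (leq_divM (size Ss) (2 * c))).
exact: leq_trans Hd (leq_mul (leqnn c) Hc).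
Qed.

Definition code (f : nat -> bool) (L : seq nat) : nat :=
  foldr (fun r acc => f r + acc.*2) 0 L.

Lemma code_lt f L : code f L < 2 ^ size L.
Proof. elim: L => [|r L IH] //=; rewrite expnS; case: (f r) => /=; lia. Qed.

Lemma code_inj f g L : code f L = code g L -> forall r, r \in L -> f r = g r.
Proof.
elim: L => [|r L IH] //= E x; rewrite inE => /orP [/eqP ->|xL].
  by move: E; case: (f r); case: (g r) => //=; lia.
apply: IH => //; move: E; case: (f r); case: (g r) => /=; lia.
Qed.

Definition mx (L : seq nat) : nat := foldr maxn 0 L.

Lemma mx_ub L x : x \in L -> x <= mx L.
Proof.
elim: L => [|y L IH] //=; rewrite inE => /orP [/eqP ->|/IH]; first exact: leq_maxl.
move=> H; exact: (leq_trans H (leq_maxr _ _)).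
Qed.

Lemma mx_mem L : L <> [::] -> mx L \in L.
Proof.
elim: L => [|y L IH] // _.
rewrite (_ : mx (y :: L) = maxn y (mx L)) //.
case: L IH => [|z L] IH; first by rewrite /= maxn0 mem_head.
case: (leqP y (mx (z :: L))) => H.
  by rewrite inE IH ?orbT.
by rewrite mem_head.
Qed.

Lemma size_bound (L : seq nat) M : pairwise ltn L -> (forall x, x \in L -> x <= M) -> size L <= M.+1.
Proof.
move=> pw H.
have u : uniq L by apply: pairwise_uniq pw => x /=; exact: ltnn.
have := uniq_leq_size u (s2 := iota 0 M.+1); rewrite size_iota; apply.
by move=> x xL; rewrite mem_iota /= add0n ltnS; apply: H.
Qed.

Lemma ar_2M M : 2 <= M -> 2 ^ (M + 2) <= 4 ^ M.
Proof.
move=> H.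
have H4 : 2 ^ 2 <= 2 ^ M by apply: leq_pexp2l.
have -> : 4 ^ M = 2 ^ M * 2 ^ M by rewrite -expnMn.
rewrite expnD; apply: leq_mul => //.
Qed.

Lemma ar_4M M : 4 <= M -> M * 2 ^ (M + 2) <= 4 ^ M.
Proof.
elim: M => [|M IH] // H.
case: (ltngtP M 3) => [|E|E]; first lia.
  have := IH E; rewrite addSn !expnS; nia.
by subst M.
Qed.

Lemma ar_M M : M * 2 ^ M <= 4 ^ M.
Proof.
have H : M < 2 ^ M by apply: ltn_expl.
have -> : 4 ^ M = 2 ^ M * 2 ^ M by rewrite -expnMn.
by apply: leq_mul => //; apply: ltnW.
Qed.

Lemma ar_2t t : 2 * t <= 4 ^ t.
Proof.
have := sq_lt_4exp t; case: t => [|[|t]] //; nia.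
Qed.

Lemma mod_split C a b x y : a < C -> b < C -> a + C * x = b + C * y -> a = b /\ x = y.
Proof.
move=> aC bC E.
have Ea : a = b.
  have := congr1 (modn^~ C) E; rewrite /= !(addnC _ (C * _)) !(mulnC C) !modnMDl !modn_small //.
split => //; subst b; move/addnI: E => E.
have C0 : 0 < C by lia.
by apply/eqP; rewrite -(eqn_pmul2l C0) E.
Qed.

Lemma Lg_downn m m' X : m <= m' -> pairwise ltn X -> (forall x, x \in X -> 1 <= x) ->
  Lg m' X -> Lg m X.
Proof.
move=> le pw pos; elim: m' le => [|m' IH] le.
  by move: le; rewrite leqn0 => /eqP ->.
move: le; rewrite leq_eqVlt => /orP [/eqP -> //|lt] H.
apply: IH => //; exact: Lg_down.
Qed.

Section Main.
Variable P : nat -> nat -> bool.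
Variable n : nat.

Definition hom (F G : seq nat) : bool :=
  all (fun x => all (fun x' => all (fun y => all (fun y' => P x y == P x' y') G) G) F) F.

Lemma homP F G : (forall x x' y y', x \in F -> x' \in F -> y \in G -> y' \in G -> P x y = P x' y') ->
  hom F G.
Proof.
move=> H; apply/allP => x xF; apply/allP => x' x'F; apply/allP => y yG; apply/allP => y' y'G.
by apply/eqP; apply: H.
Qed.

Lemma homE F G x x' y y' : hom F G -> x \in F -> x' \in F -> y \in G -> y' \in G -> P x y = P x' y'.
Proof.
move=> /allP /(_ x) H xF x'F yG y'G.
by move: (H xF) => /allP /(_ x' x'F) /allP /(_ y yG) /allP /(_ y' y'G) /eqP.
Qed.

Definition OK (T : seq nat) (chi : nat -> nat) (Fs : seq (seq nat)) : Prop :=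
  (forall F, F \in Fs -> [/\ pairwise ltn F, {subset F <= T}, Lg n F &
      forall x, x \in F -> chi x = chi (head 0 F)]) /\
  pairwise (fun F G => allrel ltn F G) Fs /\ pairwise hom Fs.

Definition MainSt k := forall T chi C, 0 < C -> pairwise ltn T -> sparse T ->
  (forall x, x \in T -> 2 * C <= x) -> (forall x, x \in T -> chi x < C) ->
  Lg (n + 3 * k + 1) T -> exists Fs, OK T chi Fs /\ Lg k (map (last 0) Fs).

Lemma last_mem (F : seq nat) : F <> [::] -> last 0 F \in F.
Proof. by case: F => // f F _; exact: mem_last. Qed.

Lemma head_mem (F : seq nat) : F <> [::] -> head 0 F \in F.
Proof. by case: F => // f F _; exact: mem_head. Qed.

Lemma Lg_ne m F : Lg m F -> F <> [::].
Proof. by move=> H E; subst F; rewrite Lg_nil in H. Qed.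

Lemma maxes_pw Fs : (forall F, F \in Fs -> F <> [::]) ->
  pairwise (fun F G => allrel ltn F G) Fs -> pairwise ltn (map (last 0) Fs).
Proof.
elim: Fs => [|F Fs IH] //= ne /andP [H1 H2]; apply/andP; split.
  apply/allP => y /mapP [G GFs ->].
  move: H1 => /allP /(_ G GFs) /allrelP; apply.
    by apply: last_mem; apply: ne; exact: mem_head.
  by apply: last_mem; apply: ne; rewrite inE GFs orbT.
by apply: IH => // G GFs; apply: ne; rewrite inE GFs orbT.
Qed.

Lemma main0 : MainSt 0.
Proof.
move=> [|t rest] chi C C0 pw sp bd cb //.
rewrite muln0 addn0 addn1 LgS => Ht.
have sub : {subset rest <= t :: rest} by move=> z zr; rewrite inE zr orbT.
have [d Hd] := PH C0 (pairwise_catr (A := [:: t]) pw) (sparse_sub sub sp)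
   (fun z zi => bd z (sub z zi)) (fun z zi => cb z (sub z zi)) Ht.
set W := [seq z <- rest | chi z == d] in Hd.
have Kpos : 0 < t %/ (2 * C) by rewrite divn_gt0 ?muln_gt0 //; apply: bd; exact: mem_head.
have LW : Lg n W by rewrite -sg1; exact: sg_le Kpos Hd.
have Wne := Lg_ne LW.
have chiW : forall x, x \in W -> chi x = d by move=> x; rewrite mem_filter => /andP [/eqP].
exists [:: W]; split; last by rewrite Lg0.
split; last by [].
move=> F; rewrite inE => /eqP ->; split => //.
- exact: pairwise_filter (pairwise_catr (A := [:: t]) pw).
- by move=> x; rewrite mem_filter => /andP [_ /sub].
- by move=> x xW; rewrite !chiW //; exact: head_mem.
Qed.

Lemma chi_eq C chi (c1 c2 : nat -> nat) x y : chi x < C -> chi y < C ->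
  chi x + C * c1 x = chi y + C * c2 y -> chi x = chi y /\ c1 x = c2 y.
Proof. exact: mod_split. Qed.

Lemma groups k (IH : MainSt k) T chi C t0 : 0 < C -> pairwise ltn T -> sparse T ->
  (forall x, x \in T -> chi x < C) -> t0 \in T -> 2 <= t0 ->
  forall Us, pairwise ltn (flatten Us) -> {subset flatten Us <= T} ->
  all (Lg (n + 3 * k + 2)) Us -> (forall z, z \in flatten Us -> t0 < z) ->
  (forall z, z \in flatten Us -> 2 * (C * 2 ^ size Us) <= z) ->
  exists Fs reps, [/\ OK T chi Fs, sg k (size Us) (map (last 0) Fs), size reps <= size Us,
    (forall G, G \in Fs -> {subset G <= flatten Us}) &
    (forall G, G \in Fs -> exists2 r, r \in reps & exists2 lo, lo \in flatten Us &
       forall x, x \in T -> x < lo -> forall y, y \in G -> P x y = P x r)].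
Proof.
move=> C0 pwT spT cbT t0T t02.
elim=> [|U Us IHU] pwU subU allU t0U bdU.
  by exists [::], [::]; split => //.
move: pwU subU allU t0U bdU; rewrite /= => pwU subU /andP [LU allU] t0U bdU.
have subUs : {subset flatten Us <= U ++ flatten Us} by move=> z zi; rewrite mem_cat zi orbT.
have subU1 : {subset U <= U ++ flatten Us} by move=> z zi; rewrite mem_cat zi.
have [Fs' [reps' [OK' sg' szr' subG' exp']]] := IHU (pairwise_catr pwU)
  (fun z zi => subU z (subUs z zi)) allU (fun z zi => t0U z (subUs z zi))
  (fun z zi => leq_trans (leq_mul (leqnn 2) (leq_mul (leqnn C) (leq_pexp2l (isT : 0 < 2) (leqnSn _)))) (bdU z (subUs z zi))).
case: U LU pwU subU t0U bdU subUs subU1 => [|u RU] //.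
have -> : n + 3 * k + 2 = (n + 3 * k + 1).+1 by lia.
rewrite LgS => Hu pwU subU t0U bdU subUs subU1.
have uT : u \in T by apply: subU; exact: mem_head.
set PreU := [seq x <- T | x < u].
have t0P : t0 \in PreU by rewrite mem_filter t0T andbT; apply: t0U; exact: mem_head.
have PreNe : PreU <> [::] by move=> E; rewrite E in t0P.
set M := mx PreU.
have MP : M \in PreU := mx_mem PreNe.
have Mu : M < u by move: MP; rewrite mem_filter => /andP [].
have MT : M \in T by move: MP; rewrite mem_filter => /andP [].
have M4 : 4 ^ M < u by apply: spT.
have M2 : 2 <= M by apply: (leq_trans t02); exact: mx_ub.
have szP : size PreU <= M.+1 by apply: size_bound; [exact: pairwise_filter | move=> x; exact: mx_ub].
set cU := 2 ^ size PreU.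
have cU0 : 0 < cU by rewrite expn_gt0.
have c2 : 2 * cU <= 2 ^ (M + 2).
  rewrite /cU -expnS; apply: leq_pexp2l; first by []. by rewrite addn2 ltnS.
have c2u : 2 * cU < u := leq_ltn_trans (leq_trans c2 (ar_2M M2)) M4.
have pwR : pairwise ltn (u :: RU) by exact: pairwise_catl pwU.
have subR : {subset RU <= T} by move=> z zi; apply: subU; rewrite inE mem_cat zi orbT.
have uR : forall z, z \in RU -> u < z by move: pwR => /andP [/allP H _].
have [eU HV] := PH (col := fun y => code (fun x => P x y) PreU) cU0 (pairwise_catr (A := [:: u]) pwR)
  (sparse_sub subR spT) (fun z zi => ltnW (ltn_trans c2u (uR z zi))) (fun z _ => code_lt _ _) Hu.
set VU := [seq z <- RU | code (fun x => P x z) PreU == eU] in HV.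
have Kpos : 0 < u %/ (2 * cU) by rewrite divn_gt0 ?muln_gt0 //; apply: ltnW.
have LV : Lg (n + 3 * k + 1) VU by rewrite -sg1; exact: sg_le Kpos HV.
have VNe := Lg_ne LV.
set r := head 0 VU.
have rV : r \in VU := head_mem VNe.
have subV : {subset VU <= RU} by move=> z; rewrite mem_filter => /andP [].
have codeV : forall y, y \in VU -> code (fun x => P x y) PreU = eU.
  by move=> y; rewrite mem_filter => /andP [/eqP].
set CU := C * 2 ^ size reps'.
have CU0 : 0 < CU by rewrite muln_gt0 C0 expn_gt0.
set chiU := fun x => chi x + C * code (fun r => P x r) reps'.
have [FsU [OKU LmU]] : exists Fs, OK VU chiU Fs /\ Lg k (map (last 0) Fs).
  apply: (IH VU chiU CU) => //.
  - exact: pairwise_filter (pairwise_catr (A := [:: u]) pwR).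
  - by apply: (sparse_sub _ spT) => z /subV /subR.
  - move=> z zV; apply: leq_trans (bdU z _); last by rewrite inE mem_cat (subV z zV) orbT.
    rewrite /CU leq_mul2l; apply/orP; right; rewrite leq_mul2l; apply/orP; right.
    apply: leq_pexp2l; first by []. exact: leq_trans szr' (leqnSn _).
  - move=> x xV; rewrite /chiU /CU.
    have := cbT x (subR x (subV x xV)); have := code_lt (fun r => P x r) reps'.
    move: (code _ _) (chi x) (2 ^ size reps') => a b e ha hb.
    apply: (@leq_trans (C + C * a)); first by rewrite ltn_add2r.
    by rewrite -mulnS leq_mul2l ha orbT.
exists (FsU ++ Fs'), (r :: reps'); split.
-
  case: OK' => [blk' [ord' hom']]; case: OKU => [blkU [ordU homU]].
  split; [|split].
  + move=> F; rewrite mem_cat => /orP [FU|F'].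
      have [pwF subF LF monoF] := blkU F FU; split => //.
        by move=> z /subF /subV /subR.
      move=> x xF.
      have hF : head 0 F \in F := head_mem (Lg_ne LF).
      have := monoF x xF; rewrite /chiU => E.
      have := mod_split (cbT x (subR x (subV x (subF x xF)))) (cbT _ (subR _ (subV _ (subF _ hF)))) E.
      by case.
    exact: blk'.
  + rewrite pairwise_cat; apply/and3P; split => //; apply/allrelP => F G FU GF'.
    have [_ subF _ _] := blkU F FU.
    apply/allrelP => x y xF yG.
    move: pwU; rewrite pairwise_cat => /and3P [/allrelP H _ _].
    apply: H; first by rewrite inE (subV x (subF x xF)) orbT.
    exact: subG' GF' y yG.
  + rewrite pairwise_cat; apply/and3P; split => //; apply/allrelP => F G FU GF'.
    have [_ subF _ monoF] := blkU F FU.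
    have [rr rrR [lo loU Hlo]] := exp' G GF'.
    apply: homP => x x' y y' xF x'F yG y'G.
    have xlo : forall x, x \in F -> x < lo.
      move=> z zF; move: pwU; rewrite pairwise_cat => /and3P [/allrelP H _ _].
      by apply: H => //; rewrite inE (subV z (subF z zF)) orbT.
    have xT : forall x, x \in F -> x \in T by move=> z zF; apply/subR/subV/subF.
    rewrite (Hlo x (xT x xF) (xlo x xF) y yG) (Hlo x' (xT x' x'F) (xlo x' x'F) y' y'G).
    have E : chiU x = chiU x' by rewrite (monoF x xF) (monoF x' x'F).
    have [_ E2] := mod_split (cbT x (xT x xF)) (cbT x' (xT x' x'F)) E.
    exact: code_inj E2 rr rrR.
-
  rewrite map_cat /=; apply: sg_cons => //.
  rewrite -map_cat; apply: maxes_pw.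
    case: OKU => [blkU _]; case: OK' => [blk' _].
    move=> F; rewrite mem_cat => /orP [/blkU [_ _ LF _]|/blk' [_ _ LF _]]; exact: Lg_ne LF.
  case: OK' => [_ [ord' _]]; case: OKU => [blkU [ordU _]].
  rewrite pairwise_cat; apply/and3P; split => //; apply/allrelP => F G FU GF'.
  have [_ subF _ _] := blkU F FU.
  apply/allrelP => x y xF yG.
  move: pwU; rewrite pairwise_cat => /and3P [/allrelP H _ _].
  apply: H; first by rewrite inE (subV x (subF x xF)) orbT.
  exact: subG' GF' y yG.
- by rewrite /= ltnS.
- move=> G; rewrite mem_cat => /orP [GU|G'].
    case: OKU => [blkU _]; have [_ subF _ _] := blkU G GU.
    by move=> z /subF /subV zR; rewrite mem_cat inE zR orbT.
  by move=> z /(subG' G G') zi; rewrite mem_cat zi orbT.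
- move=> G; rewrite mem_cat => /orP [GU|G'].
    case: OKU => [blkU _]; have [_ subF _ _] := blkU G GU.
    exists r; first exact: mem_head.
    exists u; first by rewrite mem_head.
    move=> x xT xu y yG.
    have xP : x \in PreU by rewrite mem_filter xu xT.
    apply: (code_inj (f := fun x => P x y) (g := fun x => P x r)) => //.
    exact: (etrans (codeV y (subF y yG)) (esym (codeV r rV))).
    exact: xP.
  have [rr rrR [lo loU Hlo]] := exp' G G'.
  exists rr; first by rewrite inE rrR orbT.
  by exists lo; first by rewrite mem_cat loU orbT.
Qed.

End Main.

Lemma pw_lt (A B : seq nat) x y : pairwise ltn (A ++ B) -> x \in A -> y \in B -> x < y.
Proof. by rewrite pairwise_cat => /and3P [/allrelP H _ _]; apply: H. Qed.

Lemma col_bound C a (b : bool) : a < C -> a + C * b < 2 * C.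
Proof. case: b => /= H; lia. Qed.

Section Step.
Variable P : nat -> nat -> bool.
Variable n : nat.

Lemma main_step k : MainSt P n k -> MainSt P n k.+1.
Proof.
move=> IH [|t rest] chi C C0 pwT spT bdT cbT //.
have -> : n + 3 * k.+1 + 1 = (n + 3 * k + 3).+1 by lia.
rewrite LgS => Ht.
have tT : t \in t :: rest := mem_head _ _.
have t2C : 2 * C <= t := bdT t tT.
have t2 : 2 <= t by lia.
move: (sg_le t2 Ht) => /sgS_split [S1 [rest1 [Er [LS1 /sgS_split [S2 [rest2 [Er1 [LS2 _]]]]]]]].
subst rest rest1.
have [s1 [R1 ES1]] : exists s1 R1, S1 = s1 :: R1 by move: (Lg_ne LS1); case: (S1) => // s1 R1; exists s1, R1.
have [s2 [R2 ES2]] : exists s2 R2, S2 = s2 :: R2 by move: (Lg_ne LS2); case: (S2) => // s2 R2; exists s2, R2.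
subst S1 S2.
move: LS1 LS2; have -> : n + 3 * k + 3 = (n + 3 * k + 2).+1 by lia.
rewrite !LgS => Hs1 Hs2.
set Pre := t :: s1 :: R1.
set Q := (s2 :: R2) ++ rest2.
have ET : t :: (s1 :: R1) ++ Q = Pre ++ Q by [].
rewrite ET in pwT spT bdT cbT.
have PreT : {subset Pre <= Pre ++ Q} by move=> z zi; rewrite mem_cat zi.
have QT : {subset Q <= Pre ++ Q} by move=> z zi; rewrite mem_cat zi orbT.
have R1Pre : {subset R1 <= Pre} by move=> z zi; rewrite !inE zi !orbT.
have R2Q : {subset R2 <= Q} by move=> z zi; rewrite mem_cat inE zi orbT.
have s1Pre : s1 \in Pre by rewrite !inE eqxx orbT.
have s2Q : s2 \in Q by rewrite mem_cat mem_head.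
have PreQ : forall x y, x \in Pre -> y \in Q -> x < y := fun x y => pw_lt pwT.
have pwPre : pairwise ltn Pre := pairwise_catl pwT.
have pwQ : pairwise ltn Q := pairwise_catr pwT.
have pwR1 : pairwise ltn R1.
  by move: pwPre; rewrite /Pre => /andP [_ /andP [_ H]].
have pwR2 : pairwise ltn R2.
  by move: pwQ; rewrite /Q cat_cons => /andP [_]; exact: pairwise_catl.
have s1R1 : forall z, z \in R1 -> s1 < z.
  by move: pwPre; rewrite /Pre => /andP [_ /andP [/allP H _]].
have s2R2 : forall z, z \in R2 -> s2 < z.
  by move: pwQ; rewrite /Q cat_cons => /andP [/allP H _] z zi; apply: H; rewrite mem_cat zi.
have ts1 : t < s1 by move: pwPre; rewrite /Pre => /andP [/allP H _]; apply: H; exact: mem_head.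
set M := mx Pre.
have MP : M \in Pre by apply: mx_mem; rewrite /Pre.
have M4 : 4 ^ M < s2 by apply: spT; [exact: PreT M MP|exact: QT s2 s2Q|exact: PreQ].
have s1M : s1 <= M := mx_ub s1Pre.
have tM : t <= M by apply: mx_ub; exact: mem_head.
have t4 : 4 ^ t < s1 by apply: spT; [apply: PreT; exact: mem_head | exact: PreT s1 s1Pre | exact: ts1].
have M4' : 4 <= M.
  apply: leq_trans s1M; apply: ltnW; apply: leq_ltn_trans t4.
  have t1 : 1 <= t by apply: leq_trans t2.
  exact: (leq_pexp2l (isT : 0 < 4) t1).
have szP : size Pre <= M.+1 by apply: size_bound => // x; exact: mx_ub.
set c1 := 2 ^ size Pre.
have c10 : 0 < c1 by rewrite expn_gt0.
have c2 : 2 * c1 <= 2 ^ (M + 2).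
  rewrite /c1 -expnS; apply: leq_pexp2l; first by []. by rewrite addn2 ltnS.
have c2M : 2 * c1 <= 4 ^ M := leq_trans c2 (ar_2M (leq_trans (isT : 2 <= 4) M4')).
have subR2 : {subset R2 <= Pre ++ Q} by move=> z /R2Q /QT.
have subR1 : {subset R1 <= Pre ++ Q} by move=> z /R1Pre /PreT.
have bd2 : forall z, z \in R2 -> 2 * c1 <= z.
  move=> z zi; apply: ltnW; apply: (leq_ltn_trans c2M); exact: ltn_trans M4 (s2R2 z zi).
have [d1 HZ] := PH (col := fun y => code (fun x => P x y) Pre) c10 pwR2 (sparse_sub subR2 spT)
  bd2 (fun z _ => code_lt _ _) Hs2.
set Z := [seq z <- R2 | code (fun x => P x z) Pre == d1] in HZ.
have KZ : 0 < s2 %/ (2 * c1).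
  rewrite divn_gt0; last by rewrite muln_gt0 c10.
  apply: ltnW; exact: leq_ltn_trans c2M M4.
have ZNe : Z <> [::] := nonempty_of_sg KZ HZ.
set y0 := head 0 Z.
have y0Z : y0 \in Z by apply: head_mem.
have subZ : {subset Z <= R2} by move=> z; rewrite mem_filter => /andP [].
have codeZ : forall y, y \in Z -> code (fun x => P x y) Pre = d1.
  by move=> y; rewrite mem_filter => /andP [/eqP].
set col0 := fun x => chi x + C * P x y0.
have C20 : 0 < 2 * C by rewrite muln_gt0.
have C4 : 2 * (2 * C) <= 4 ^ t := leq_trans (leq_mul (leqnn 2) t2C) (ar_2t t).
have [d0 HF] := PH (col := col0) C20 pwR1 (sparse_sub subR1 spT)
  (fun z zi => ltnW (leq_ltn_trans C4 (ltn_trans t4 (s1R1 z zi))))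
  (fun z zi => col_bound (P z y0) (cbT z (subR1 z zi))) Hs1.
set F0 := [seq z <- R1 | col0 z == d0] in HF.
have KF : 0 < s1 %/ (2 * (2 * C)).
  rewrite divn_gt0; last by rewrite muln_gt0 C20.
  apply: ltnW; exact: leq_ltn_trans C4 t4.
have LF0' : Lg (n + 3 * k + 2) F0 by rewrite -sg1; exact: sg_le KF HF.
have subF0 : {subset F0 <= R1} by move=> z; rewrite mem_filter => /andP [].
have pwF0 : pairwise ltn F0 := pairwise_filter _ pwR1.
have pos : forall x, x \in Pre ++ Q -> 1 <= x by move=> x /bdT H; exact: leq_trans C20 H.
have LF0 : Lg n F0 by apply: (Lg_downn (m' := n + 3 * k + 2)) => //; [exact: leq_trans (leq_addr _ _) (leq_addr _ _) | move=> x /subF0 /subR1 /pos].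
have F0Ne := Lg_ne LF0.
set m0 := last 0 F0.
have m0M : m0 <= M by apply: mx_ub; apply/R1Pre/subF0; exact: last_mem.
have m0s2 : m0 <= s2 %/ (2 * c1).
  rewrite leq_divRL; last by rewrite muln_gt0 c10.
  apply: ltnW; apply: leq_ltn_trans M4.
  apply: leq_trans (ar_4M M4'); exact: leq_mul m0M c2.
have [Us [Rz [EUs [allUs EZ]]]] := sg_list (sg_le m0s2 HZ).
have pwZ : pairwise ltn Z := pairwise_filter _ pwR2.
have subUs : {subset flatten Us <= Z} by move=> z zi; rewrite EZ mem_cat zi.
have pwUs : pairwise ltn (flatten Us) by move: pwZ; rewrite EZ; exact: pairwise_catl.
have bdUs : forall z, z \in flatten Us -> 2 * (C * 2 ^ size Us) <= z.
  move=> z zi; apply: ltnW; apply: leq_ltn_trans (ltn_trans M4 (s2R2 z (subZ z (subUs z zi)))).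
  rewrite EUs mulnA; apply: leq_trans (ar_M M); apply: leq_mul.
    exact: leq_trans t2C tM.
  exact: leq_pexp2l.
have [FsG [reps [OKG sgG _ subG _]]] := groups IH C0 pwT spT cbT (PreT t (mem_head _ _)) t2
  pwUs (fun z zi => subR2 z (subZ z (subUs z zi))) allUs
  (fun z zi => PreQ t z (mem_head _ _) (R2Q z (subZ z (subUs z zi)))) bdUs.
have F0Pre : {subset F0 <= Pre} by move=> z /subF0 /R1Pre.
have GQ : forall G, G \in FsG -> {subset G <= Q}.
  by move=> G GF z /(subG G GF) /subUs /subZ /R2Q.
have GZ : forall G, G \in FsG -> {subset G <= Z}.
  by move=> G GF z /(subG G GF) /subUs.
have col0F : forall x, x \in F0 -> col0 x = d0.
  by move=> x; rewrite mem_filter => /andP [/eqP].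
have hF0 : head 0 F0 \in F0 := head_mem F0Ne.
have cbF : forall x, x \in F0 -> chi x < C by move=> x /F0Pre /PreT /cbT.
exists (F0 :: FsG); split; last first.
  by rewrite /= LgS -/m0 -EUs.
case: OKG => [blkG [ordG homG]].
split; [|split].
- move=> F; rewrite inE => /orP [/eqP ->|FG]; last exact: blkG.
  split => //.
    by move=> z /F0Pre /PreT.
  move=> x xF.
  have E : col0 x = col0 (head 0 F0) by rewrite !col0F.
  by have [] := mod_split (cbF x xF) (cbF _ hF0) E.
- rewrite pairwise_cons ordG andbT; apply/allP => G GF; apply/allrelP => x y xF yG.
  apply: PreQ; [exact: F0Pre | exact: GQ GF y yG].
- rewrite pairwise_cons homG andbT; apply/allP => G GF.
  apply: homP => x x' y y' xF x'F yG y'G.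
  have Py : forall x y, x \in F0 -> y \in G -> P x y = P x y0.
    move=> a b aF bG.
    apply: (code_inj (f := fun x => P x b) (g := fun x => P x y0)); last exact: F0Pre.
    exact: (etrans (codeZ b (GZ G GF b bG)) (esym (codeZ y0 y0Z))).
  rewrite (Py x y xF yG) (Py x' y' x'F y'G).
  have E : col0 x = col0 x' by rewrite !col0F.
  have [_ E2] := mod_split (cbF x xF) (cbF x' x'F) E.
  by move: E2; case: (P x y0); case: (P x' y0).
Qed.

Lemma mainAll k : MainSt P n k.
Proof. elim: k => [|k IH]; [exact: main0 | exact: main_step]. Qed.

End Step.

Theorem theorem2p4 (n k : nat) (X : seq nat) :
  sorted ltn X ->
  large (omega_pow (n + 6 * k)) X ->
  exp_sparse X ->
  forall P : nat -> nat -> bool,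
    exists Fs : seq (seq nat), grouping (omega_pow n) (omega_pow k) X P Fs.
Proof.
move=> sX lX [X3 spX] P.
have pwX : pairwise ltn X by rewrite -sorted_pairwise //; exact: ltn_trans.
have spX' : sparse X by move=> x y xi yi lt; exact: spX.
have pos : forall x, x \in X -> 1 <= x by move=> x /X3 H; exact: leq_trans _ H.
have [Fs [[blk [ord hm]] LK]] : exists Fs, OK P n X (fun _ => 0) Fs /\ Lg k (map (last 0) Fs).
  case: k lX => [|k] lX.
    have LX : Lg n X by move: lX; rewrite muln0 addn0.
    exists [:: X]; split; last by rewrite Lg0.
    split; last by [].
    by move=> F; rewrite inE => /eqP ->; split.
  apply: (@mainAll P n k.+1 X (fun _ => 0) 1) => //.
  - by move=> x /X3; rewrite muln1 => H; exact: leq_trans _ H.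
  - apply: (Lg_downn (m' := n + 6 * k.+1)) => //; lia.
exists Fs; rewrite /grouping.
have nthF : forall i, i < size Fs -> nth [::] Fs i \in Fs by move=> i; exact: mem_nth.
split; [|split; [|split; [|split]]].
- move=> i /nthF /blk [pwF subF _ _]; split => //.
  by rewrite sorted_pairwise //; exact: ltn_trans.
- move=> i j /andP [ij jF].
  have iF : i < size Fs := ltn_trans ij jF.
  have [_ _ Li _] := blk _ (nthF i iF).
  have [_ _ Lj _] := blk _ (nthF j jF).
  move/(pairwiseP [::]): ord => H.
  have := H i j iF jF ij => /allrelP; apply.
    exact: last_mem (Lg_ne Li).
  exact: head_mem (Lg_ne Lj).
- by move=> i /nthF /blk [].
- exact: LK.
- move=> i j /andP [ij jF] x x' y y' xi x'i yj y'j.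
  have iF : i < size Fs := ltn_trans ij jF.
  move/(pairwiseP [::]): hm => H.
  exact: homE (H i j iF jF ij) xi x'i yj y'j.
Qed.
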